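(* The set function $A\mapsto\bar\Lambda(A,P)$ on $2^E$ is monotone (i.e. $\bar\Lambda(A,P)\le\bar\Lambda(B,P)$ for $A\subseteq B\subseteq E$) and submodular (i.e. $\bar\Lambda(A\cup\{e\},P)-\bar\Lambda(A,P)\ge\bar\Lambda(B\cup\{e\},P)-\bar\Lambda(B,P)$ for all $A\subseteq B\subseteq E$, $e\in E$).
   Context: $G=(V,E)$ is a simple directed acyclic graph with capacities $C\in\mathbb{R}_{\ge0}^E$ and $\gamma$ is a budget with $0<\gamma\le\min_eC(e)$. User paths $P=\{p_1,\dots,p_k\}$ are directed paths (edge sets, not necessarily disjoint) with initial values $\lambda_i\ge0$, $\sum_{i:e\in p_i}\lambda_i\le C(e)$ for all $e$. Let $E_1$ be the set of edges lying on exactly one user path and $E_2$ the set of edges lying on at least two user paths. For $A\subseteq E$ let $\tilde C_A(e)=C(e)-\gamma\mathbf{1}_{\{e\in A\}}$. Define $\tilde\lambda^{(1)}_{iA}=\min\big(\lambda_i,\min_{e\in p_i\cap E_1}\tilde C_A(e)\big)$ and $\tilde\lambda^{(2)}_{iA}=\tilde\lambda^{(1)}_{iA}\cdot\prod_{e\in p_i\cap E_2,\ \tilde C_A(e)\le\sum_{j:e\in p_j}\lambda_j}\frac{\tilde C_A(e)}{\sum_{j:e\in p_j}\lambda_j}$, and $\bar\Lambda(A,P)=\sum_i\lambda_i-\sum_i\tilde\lambda^{(2)}_{iA}$. *)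

(* Defs.v *)
From HB Require Import structures.
From mathcomp Require Import all_boot all_order all_algebra.
Set Implicit Arguments. Unset Strict Implicit. Unset Printing Implicit Defensive.
Import Order.TTheory GRing.Theory Num.Theory.
Local Open Scope ring_scope.

Section Defs.
Variable V : finType.

Definition erel (E : {set V * V}) : rel V := fun u v => (u, v) \in E.

(* Simple: no self-loops (parallel edges are impossible since E is a set). *)
Definition simple_digraph (E : {set V * V}) : Prop :=
  forall v : V, (v, v) \notin E.

Definition acyclic (E : {set V * V}) : Prop :=
  forall c : seq V, c != [::] -> ~~ cycle (erel E) c.

Definition path_edges (x : V) (s : seq V) : {set V * V} :=
  [set e in zip (x :: s) s].

Definition is_dpath (E : {set V * V}) (P : {set V * V}) : Prop :=
  exists (x : V) (s : seq V),
    [/\ path (erel E) x s, uniq (x :: s) & P = path_edges x s].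

Variable R : realFieldType.
Variables (k : nat) (P : 'I_k -> {set V * V}) (E : {set V * V}).
Variables (C : V * V -> R) (gamma : R) (lam : 'I_k -> R).

Definition npaths (e : V * V) : nat := #|[set i | e \in P i]|.
Definition E1 : {set V * V} := [set e in E | npaths e == 1%N].
Definition E2 : {set V * V} := [set e in E | (2 <= npaths e)%N].

Definition load (e : V * V) : R := \sum_(i | e \in P i) lam i.

Definition Ctil (A : {set V * V}) (e : V * V) : R :=
  C e - gamma * (e \in A)%:R.

Definition lam1 (i : 'I_k) (A : {set V * V}) : R :=
  \big[Order.min/lam i]_(e in P i :&: E1) Ctil A e.

Definition lam2 (i : 'I_k) (A : {set V * V}) : R :=
  lam1 i A * \prod_(e in P i :&: E2 | Ctil A e <= load e) (Ctil A e / load e).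

Definition LambdaBar (A : {set V * V}) : R :=
  \sum_i lam i - \sum_i lam2 i A.

End Defs.

(* Main.v *)
Require Import Defs.
From HB Require Import structures.
From mathcomp Require Import all_boot all_order all_algebra.
From mathcomp Require Import lra.
Import Order.TTheory GRing.Theory Num.Theory.
Set Implicit Arguments. Unset Strict Implicit. Unset Printing Implicit Defensive.
Local Open Scope ring_scope.

Section Aux.
Variable R : realFieldType.
Variable T : finType.

Definition good (F : {set T} -> R) :=
  [/\ (forall A : {set T}, 0 <= F A),
      (forall A B : {set T}, A \subset B -> F B <= F A) &
      (forall (A B : {set T}) (e : T), A \subset B -> F B - F (e |: B) <= F A - F (e |: A))].

Lemma good_ext F G : good F -> (forall A, F A = G A) -> good G.
Proof.
move=> [h1 h2 h3] FG; split.
- by move=> A; rewrite -FG.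
- by move=> A B AB; rewrite -!FG; apply: h2.
- by move=> A B e AB; rewrite -!FG; apply: h3.
Qed.

Lemma good_const (c : R) : 0 <= c -> good (fun _ : {set T} => c).
Proof. by move=> c0; split => // *; rewrite subrr. Qed.

Lemma good_mul F G : good F -> good G -> good (fun A => F A * G A).
Proof.
move=> [f0 f1 f2] [g0 g1 g2]; split.
- by move=> A; rewrite mulr_ge0.
- by move=> A B AB; apply: ler_pM => //; [apply: f1|apply: g1].
move=> A B e AB.
have eq (X : {set _}) : F X * G X - F (e |: X) * G (e |: X) =
   F X * (G X - G (e |: X)) + G (e |: X) * (F X - F (e |: X)).
  by rewrite mulrBr mulrBr addrA [G _ * F _]mulrC subrK [G _ * _]mulrC.
rewrite !eq; apply: lerD.
- apply: ler_pM => //; [by rewrite subr_ge0 g1 // subsetUr| by apply: f1 | by apply: g2].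
- apply: ler_pM => //; [by rewrite subr_ge0 f1 // subsetUr| | by apply: f2].
  by apply: g1; rewrite setUS.
Qed.

Lemma good_prod (I : Type) (r : seq I) (Pr : pred I) (G : I -> {set T} -> R) :
  (forall i, Pr i -> good (G i)) -> good (fun A => \prod_(i <- r | Pr i) G i A).
Proof.
move=> hG; elim: r => [|j r IH].
  by eapply good_ext; first exact: (@good_const 1 ler01); move=> A; rewrite big_nil.
case Pj: (Pr j).
  by eapply good_ext; first exact: (good_mul (hG j Pj) IH); move=> A; rewrite big_cons Pj.
by eapply good_ext; first exact: IH; move=> A; rewrite big_cons Pj.
Qed.

Lemma good_edge (e0 : T) (f : bool -> R) : 0 <= f true -> f true <= f false ->
  good (fun A => f (e0 \in A)).
Proof.
move=> f0 f1; split.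
- by move=> A; case: (e0 \in A) => //; apply: le_trans f1.
- move=> A B /subsetP AB; case eA: (e0 \in A); first by rewrite (AB _ eA).
  by case: (e0 \in B).
move=> A B e /subsetP AB; rewrite !in_setU1.
case eB: (e0 \in B); rewrite ?orbT ?subrr.
  by case: (e0 \in A); case: (e0 == e); rewrite /= ?subrr ?subr_ge0.
by have -> : (e0 \in A) = false by apply/negP => /AB; rewrite eB.
Qed.

Lemma min_mono (a b c d : R) : a <= c -> b <= d -> Order.min a b <= Order.min c d.
Proof. by case: (lerP a b); case: (lerP c d); lra. Qed.

Lemma min_dec (c g m1 m2 : R) : 0 <= g -> m2 <= m1 ->
  Order.min c m2 - Order.min (c - g) m2 <= Order.min c m1 - Order.min (c - g) m1.
Proof.
move=> g0 m21.
by case: (lerP c m2); case: (lerP (c - g) m2); case: (lerP c m1);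
   case: (lerP (c - g) m1); lra.
Qed.

Lemma good_min (S : {set T}) (l : R) (C : T -> R) (g : R) :
  0 <= l -> 0 <= g -> (forall e, e \in S -> g <= C e) ->
  good (fun A => \big[Order.min/l]_(e in S) (C e - g * (e \in A)%:R)).
Proof.
move=> l0 g0 hC.
have Cmono (A B : {set T}) (e : T) : A \subset B -> C e - g * (e \in B)%:R <= C e - g * (e \in A)%:R.
  move=> /subsetP AB; case eA: (e \in A); first by rewrite (AB _ eA).
  by case: (e \in B); rewrite /= ?mulr1 ?mulr0; lra.
have mono (A B : {set T}) (Q : pred T) : A \subset B ->
   \big[Order.min/l]_(e in S | Q e) (C e - g * (e \in B)%:R) <=
   \big[Order.min/l]_(e in S | Q e) (C e - g * (e \in A)%:R).
  move=> AB; apply: (big_ind2 (fun x y => x <= y)) => //.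
    by move=> *; apply: min_mono.
  by move=> e _; apply: Cmono.
have mono0 (A B : {set T}) : A \subset B ->
   \big[Order.min/l]_(e in S) (C e - g * (e \in B)%:R) <=
   \big[Order.min/l]_(e in S) (C e - g * (e \in A)%:R).
  move=> AB; apply: (big_ind2 (fun x y => x <= y)) => //.
    by move=> *; apply: min_mono.
  by move=> e _; apply: Cmono.
split.
- move=> A; apply: (big_ind (fun x => 0 <= x)) => //.
    by move=> x y x0 y0; rewrite le_min x0 y0.
  move=> e eS; have := hC e eS; case: (e \in A); rewrite /= ?mulr1 ?mulr0; lra.
- by move=> A B AB; apply: mono0.
move=> A B e0 AB.
have monoU (X : {set T}) : \big[Order.min/l]_(e in S) (C e - g * (e \in e0 |: X)%:R) <=
               \big[Order.min/l]_(e in S) (C e - g * (e \in X)%:R).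
  by apply: mono0; apply: subsetUr.
case eS: (e0 \in S); last first.
  have same (X : {set T}) : \big[Order.min/l]_(e in S) (C e - g * (e \in e0 |: X)%:R) =
                \big[Order.min/l]_(e in S) (C e - g * (e \in X)%:R).
    apply: eq_bigr => e iS; rewrite in_setU1.
    by have -> : (e == e0) = false by apply/eqP => E; rewrite -E iS in eS.
  by rewrite !same !subrr.
case eB: (e0 \in B).
  have -> : e0 |: B = B by apply/setUidPr; rewrite sub1set.
  rewrite subrr subr_ge0; apply: monoU.
have eA : (e0 \in A) = false by apply/negP => /(subsetP AB); rewrite eB.
pose m := fun X : {set T} => \big[Order.min/l]_(e in S | e != e0) (C e - g * (e \in X)%:R).
have split (X : {set T}) : e0 \notin X ->
  \big[Order.min/l]_(e in S) (C e - g * (e \in X)%:R) = Order.min (C e0) (m X) /\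
  \big[Order.min/l]_(e in S) (C e - g * (e \in e0 |: X)%:R) = Order.min (C e0 - g) (m X).
  move=> nX; split; rewrite /m (bigD1 e0) //=.
    by rewrite (negbTE nX) mulr0 subr0.
  rewrite setU11 mulr1; congr Order.min; apply: eq_bigr => e /andP[_ ne].
  by rewrite in_setU1 (negbTE ne).
have [-> ->] := split B (negbT eB).
have [-> ->] := split A (negbT eA).
apply: min_dec => //; exact: mono.
Qed.

End Aux.

Theorem lemma2 (V : finType) (E : {set V * V}) (R : realFieldType)
  (C : V * V -> R) (gamma : R) (k : nat) (P : 'I_k -> {set V * V})
  (lam : 'I_k -> R) :
  simple_digraph E ->
  acyclic E ->
  (forall e, e \in E -> 0 <= C e) ->
  0 < gamma ->
  (forall e, e \in E -> gamma <= C e) ->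
  (forall i, is_dpath E (P i)) ->
  (forall i, 0 <= lam i) ->
  (forall e, e \in E -> load P lam e <= C e) ->
  (forall A B : {set V * V}, A \subset B -> B \subset E ->
     LambdaBar P E C gamma lam A <= LambdaBar P E C gamma lam B) /\
  (forall (A B : {set V * V}) (e : V * V), A \subset B -> B \subset E -> e \in E ->
     LambdaBar P E C gamma lam (e |: B) - LambdaBar P E C gamma lam B
     <= LambdaBar P E C gamma lam (e |: A) - LambdaBar P E C gamma lam A).
Proof.
move=> _ _ C0 g0 gC _ lam0 _.
have g0' : 0 <= gamma by apply: ltW.
have load0 e : 0 <= load P lam e by apply: sumr_ge0.
have hE1 i e : e \in P i :&: E1 P E -> e \in E.
  by rewrite !inE => /and3P[_ ->].
have hE2 i e : e \in P i :&: E2 P E -> e \in E.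
  by rewrite !inE => /and3P[_ ->].
have G i : good (lam2 P E C gamma lam i).
  have G1 := @good_min R _ (P i :&: E1 P E) (lam i) C gamma (lam0 i) g0' (fun e eS => gC e (hE1 i e eS)).
  pose f e (b : bool) := let x := C e - gamma * b%:R in
           if x <= load P lam e then x / load P lam e else 1.
  have H2 : forall e, e \in P i :&: E2 P E -> good (fun A : {set V * V} => f e (e \in A)).
    move=> e eS; apply: good_edge; rewrite /f /= ?mulr1 ?mulr0 ?subr0.
      have hc := gC e (hE2 i e eS); set L := load P lam e; have L0 := load0 e.
      have cg0 : 0 <= C e - gamma by lra.
      by case: (lerP (C e - gamma) L) => h1 //; rewrite divr_ge0.
    have hc := gC e (hE2 i e eS); set L := load P lam e; have L0 := load0 e.
    have cg0 : 0 <= C e - gamma by lra.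
    case: (lerP (C e - gamma) L) => h1; case: (lerP (C e) L) => h2.
    - by apply: ler_wpM2r; rewrite ?invr_ge0 //; lra.
    - have [->|Lne] := eqVneq L 0; first by rewrite invr0 mulr0.
      by rewrite ler_pdivrMr ?mul1r // lt_def Lne L0.
    - lra.
    - lra.
  have G2 := @good_prod R _ _ (index_enum _) _ _ H2.
  eapply good_ext; first exact: (good_mul G1 G2).
  move=> A; rewrite /lam2 /lam1 /Ctil; congr (_ * _).
  by rewrite big_mkcondr /=.
have Gs := fun i => G i.
split.
  move=> A B AB _; rewrite /LambdaBar lerD2l lerN2.
  by apply: ler_sum => i _; case: (G i) => _ h _; apply: h.
move=> A B e AB _ _; rewrite /LambdaBar.
have eq (X : {set _}) : (\sum_i lam i - \sum_i lam2 P E C gamma lam i (e |: X)) -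
  (\sum_i lam i - \sum_i lam2 P E C gamma lam i X) =
  \sum_i (lam2 P E C gamma lam i X - lam2 P E C gamma lam i (e |: X)).
  by rewrite sumrB; lra.
rewrite !eq; apply: ler_sum => i _; case: (G i) => _ _ h; exact: h.
Qed.
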